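(* Consider $n$ agents, where agent $i$ has a private type $t_i\in[0,\infty)$ and additive valuation $v_i(t_i,S)=t_i+w_i(S)$ for winning sets $S\ni i$ (and $v_i(t_i,S)=0$ for $S\not\ni i$), with publicly known $w_i$. Then an allocation rule $\mathcal{A}:[0,\infty)^n\to2^{[n]}$ can be truthfully implemented if and only if it is monotone: for every agent $i$, every $b_{-i}$ and every $b_i'\ge b_i$, $i\in\mathcal{A}(b_{-i},b_i)$ implies $i\in\mathcal{A}(b_{-i},b_i')$.
   Context: $\mathcal{A}$ can be truthfully implemented if there exist payment functions $p_i$, with $p_i(b)=0$ whenever $i\notin\mathcal{A}(b)$, such that for every $i$, every $b_{-i}$ and all $t_i,b_i\in[0,\infty)$: $v_i(t_i,\mathcal{A}(b_{-i},t_i))-p_i(b_{-i},t_i)\ge v_i(t_i,\mathcal{A}(b_{-i},b_i))-p_i(b_{-i},b_i)$. *)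

(* Defs.v *)
From HB Require Import structures.
From mathcomp Require Import all_boot all_order all_algebra.
From mathcomp Require Import reals.
Set Implicit Arguments. Unset Strict Implicit. Unset Printing Implicit Defensive.
Import Order.TTheory GRing.Theory Num.Theory.
Local Open Scope ring_scope.

Definition profile (R : realType) (n : nat) := 'I_n -> R.

(* The profile (b_{-i}, x): b with the i-th coordinate replaced by x. *)
Definition upd (R : realType) (n : nat) (b : profile R n) (i : 'I_n) (x : R)
  : profile R n := fun j => if j == i then x else b j.

Definition nonneg_profile (R : realType) (n : nat) (b : profile R n) : Prop :=
  forall j, 0 <= b j.

Definition addval (R : realType) (n : nat) (w : 'I_n -> {set 'I_n} -> R)
  (i : 'I_n) (t : R) (S : {set 'I_n}) : R :=
  if i \in S then t + w i S else 0.

Definition truthfully_implementable (R : realType) (n : nat)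
  (v : 'I_n -> R -> {set 'I_n} -> R)
  (A : profile R n -> {set 'I_n}) : Prop :=
  exists p : 'I_n -> profile R n -> R,
    (forall i b, nonneg_profile b -> i \notin A b -> p i b = 0) /\
    (forall i (b : profile R n) (t bi : R), nonneg_profile b -> 0 <= t -> 0 <= bi ->
       v i t (A (upd b i bi)) - p i (upd b i bi)
         <= v i t (A (upd b i t)) - p i (upd b i t)).

Definition monotone_alloc (R : realType) (n : nat)
  (A : profile R n -> {set 'I_n}) : Prop :=
  forall i (b : profile R n) (bi bi' : R), nonneg_profile b -> 0 <= bi -> bi <= bi' ->
    i \in A (upd b i bi) -> i \in A (upd b i bi').

(* Main.v *)
Require Import Defs.
From HB Require Import structures.
From mathcomp Require Import all_boot all_order all_algebra.
From mathcomp Require Import reals.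
From mathcomp Require Import boolp classical_sets.
From mathcomp Require Import lra.
Import Order.TTheory GRing.Theory Num.Theory.
Local Open Scope ring_scope.
Local Open Scope classical_set_scope.

Lemma upd_upd (R : realType) (n : nat) (b : profile R n) i x y :
  upd (upd b i y) i x = upd b i x.
Proof. apply: funext => j; rewrite /upd; by case: (j == i). Qed.

Lemma upd_nonneg (R : realType) (n : nat) (b : profile R n) i x :
  nonneg_profile b -> 0 <= x -> nonneg_profile (upd b i x).
Proof. move=> hb hx j; rewrite /upd; by case: (j == i). Qed.

Definition winset (R : realType) (n : nat) (A : profile R n -> {set 'I_n})
  (i : 'I_n) (b : profile R n) : set R :=
  [set x | 0 <= x /\ i \in A (upd b i x)].

Arguments winset {R n}.

Lemma winset_upd (R : realType) (n : nat) (A : profile R n -> {set 'I_n}) i b y :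
  winset A i (upd b i y) = winset A i b.
Proof. rewrite /winset; apply: funext => x /=; by rewrite upd_upd. Qed.

Theorem corollary1 (R : realType) (n : nat) (w : 'I_n -> {set 'I_n} -> R)
  (A : profile R n -> {set 'I_n}) :
  truthfully_implementable (addval w) A <-> monotone_alloc A.
Proof.
split.
- move=> [p [p0 tr]] i b bi bi' hb hbi hle win.
  case: (boolP (i \in A (upd b i bi'))) => // lose.
  have hbi' : 0 <= bi' by apply: le_trans hle.
  case: (eqVneq bi bi') => [e|ne]; first by rewrite -e win in lose.
  have lt : bi < bi' by rewrite lt_neqAle ne hle.
  have h1 := tr i b bi bi' hb hbi hbi'.
  have h2 := tr i b bi' bi hb hbi' hbi.
  rewrite /addval (negbTE lose) win in h1 h2.
  rewrite p0 // in h1 h2; last by apply: upd_nonneg.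
  have : bi' <= bi by lra.
  by rewrite leNgt lt.
- move=> mono.
  exists (fun i b => if i \in A b then inf (winset A i b) + w i (A b) else 0).
  split.
  + by move=> i b _ /negbTE ->.
  + move=> i b t bi hb ht hbi.
    rewrite !winset_upd /addval.
    set E := winset A i b.
    have lbE : has_lbound E by exists 0 => x; rewrite /E /winset /= => -[].
    case: (boolP (i \in A (upd b i bi))) => wb;
    case: (boolP (i \in A (upd b i t))) => wt.
    * lra.
    *
      have : t <= inf E.
        apply: lb_le_inf; first by exists bi.
        move=> x; rewrite /E /winset /= => -[hx wx]; case: (leP t x) => // ltx.
        by rewrite (mono i b x t hb hx (ltW ltx) wx) in wt.
      lra.
    * have : inf E <= t by apply: ge_inf => //; rewrite /E /winset /=; split.
      lra.
    * lra.
Qed.
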